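(* Let $\kappa,\lambda,\mu$ be cardinals. Then $\binom{\kappa}{\lambda}\rightarrow\binom{\kappa}{\mu}_2$ implies $\binom{\mathrm{cf}(\kappa)}{\lambda}\rightarrow\binom{\mathrm{cf}(\kappa)}{\mu}_2$.
   Context: Notation: $\binom{\lambda}{\kappa}\rightarrow\binom{\alpha}{\beta}_\chi$ means that for every coloring $c:\lambda\times\kappa\rightarrow\chi$ there are $A\subseteq\lambda$, $B\subseteq\kappa$ with $\mathrm{otp}(A)=\alpha$, $\mathrm{otp}(B)=\beta$ and $c\upharpoonright(A\times B)$ constant. *)

(* Defs.v *)
(* Ordinals are represented as well-ordered types
   (types with a well-founded strict total order); cardinals as initial
   ordinals. *)
From Stdlib Require Import Classical.

Record woType := WoType {
  wcar :> Type;
  wlt : wcar -> wcar -> Prop;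
  wlt_wf : well_founded wlt;
  wlt_irrefl : forall x, ~ wlt x x;
  wlt_trans : forall x y z, wlt x y -> wlt y z -> wlt x z;
  wlt_total : forall x y, wlt x y \/ x = y \/ wlt y x
}.

Arguments wlt {w} x y.

Definition has_otp {K : woType} (A : K -> Prop) (alpha : woType) : Prop :=
  exists (f : {x : K | A x} -> alpha) (g : alpha -> {x : K | A x}),
    (forall a, g (f a) = a) /\ (forall b, f (g b) = b) /\
    (forall a b, wlt (proj1_sig a) (proj1_sig b) <-> wlt (f a) (f b)).

Definition is_cardinal (K : woType) : Prop :=
  forall (x : K) (f : K -> {y : K | wlt y x}) (g : {y : K | wlt y x} -> K),
    ~ ((forall a, g (f a) = a) /\ (forall b, f (g b) = b)).

Definition cofinal {K : woType} (A : K -> Prop) : Prop :=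
  forall x : K, exists y, A y /\ (x = y \/ wlt x y).

(* C has order type cf(K): C is the order type of some cofinal subset of K
   and is <= the order type of every cofinal subset of K. *)
Definition is_cof (K C : woType) : Prop :=
  (exists A : K -> Prop, cofinal A /\ has_otp A C) /\
  (forall A : K -> Prop, cofinal A ->
     exists f : C -> {x : K | A x},
       forall c d, wlt c d -> wlt (proj1_sig (f c)) (proj1_sig (f d))).

(* (lam kap) -> (alpha beta)_chi  with chi given as a type of colours:
   every c : lam x kap -> chi has A ⊆ lam, B ⊆ kap of order types
   alpha, beta with c constant on A x B. *)
Definition polarized (lam kap alpha beta : woType) (chi : Type) : Prop :=
  forall c : lam -> kap -> chi,
    exists (A : lam -> Prop) (B : kap -> Prop),
      has_otp A alpha /\ has_otp B beta /\
      exists col : chi, forall x y, A x -> B y -> c x y = col.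

(* Main.v *)
Require Import Defs.
From Stdlib Require Import Classical IndefiniteDescription ProofIrrelevance.

Definition cid := constructive_indefinite_description.

Section S.
Context {K L : woType}.

Lemma strict_inj (F : K -> L) : (forall a b, wlt a b -> wlt (F a) (F b)) ->
  forall a b, F a = F b -> a = b.
Proof.
  intros HF a b E. destruct (wlt_total _ a b) as [H|[H|H]]; auto.
  - apply HF in H. rewrite E in H. now apply wlt_irrefl in H.
  - apply HF in H. rewrite E in H. now apply wlt_irrefl in H.
Qed.

Lemma strict_refl (F : K -> L) : (forall a b, wlt a b -> wlt (F a) (F b)) ->
  forall a b, wlt (F a) (F b) -> wlt a b.
Proof.
  intros HF a b E. destruct (wlt_total _ a b) as [H|[H|H]]; auto.
  - subst. now apply wlt_irrefl in E.
  - apply HF in H. exfalso. apply (wlt_irrefl _ (F a)). eapply wlt_trans; eauto.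
Qed.

Lemma image_otp (F : K -> L) (HF : forall a b, wlt a b -> wlt (F a) (F b)) :
  has_otp (fun y => exists x, F x = y) K.
Proof.
  exists (fun a : {y : L | exists x, F x = y} => proj1_sig (cid K (fun x => F x = proj1_sig a) (proj2_sig a))).
  exists (fun b => exist _ (F b) (ex_intro _ b eq_refl)).
  split; [|split].
  - intros [y Hy]. simpl. destruct (cid _ _ Hy) as [x Hx]. simpl. subst y.
    f_equal. apply proof_irrelevance.
  - intros b. simpl. destruct (cid _ _ _) as [x Hx]. simpl.
    apply (strict_inj F HF); exact Hx.
  - intros [y1 H1] [y2 H2]. simpl.
    destruct (cid _ _ H1) as [x1 e1]. destruct (cid _ _ H2) as [x2 e2].
    simpl. subst. split; [apply strict_refl; auto | apply HF].
Qed.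
End S.

Lemma strict_ge {K : woType} (P : K -> K) :
  (forall a b, wlt a b -> wlt (P a) (P b)) -> forall z, z = P z \/ wlt z (P z).
Proof.
  intros HP z. induction z as [z IH] using (well_founded_induction (wlt_wf K)).
  destruct (wlt_total _ z (P z)) as [H|[H|H]]; auto.
  exfalso. destruct (IH _ H) as [E|E].
  - pose proof (HP _ _ H) as H'. rewrite <- E in H'. now apply wlt_irrefl in H'.
  - pose proof (HP _ _ H) as H'. apply (wlt_irrefl _ (P z)). eapply wlt_trans; eauto.
Qed.

Theorem proposition2p9 (kappa lambda mu cfk : woType) :
  is_cardinal kappa -> is_cardinal lambda -> is_cardinal mu ->
  is_cof kappa cfk ->
  polarized kappa lambda kappa mu bool ->
  polarized cfk lambda cfk mu bool.
Proof.
  intros _ _ _ [[A0 [cofA0 [f0 [g0 [Hfg0 [Hgf0 Hord0]]]]]] Hcof] Hpol c.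
  set (G := fun x => proj1_sig (g0 x)).
  assert (GS : forall a b, wlt a b -> wlt (G a) (G b)).
  { intros a b H. unfold G. apply Hord0. rewrite !Hgf0. exact H. }
  assert (hex : forall x : kappa, exists xi, x = G xi \/ wlt x (G xi)).
  { intros x. destruct (cofA0 x) as [y [Ay Hy]]. exists (f0 (exist _ y Ay)).
    unfold G. rewrite Hfg0. simpl. exact Hy. }
  set (h := fun x => proj1_sig (cid _ _ (hex x))).
  assert (hh : forall x, x = G (h x) \/ wlt x (G (h x))).
  { intros x. unfold h. exact (proj2_sig (cid _ _ (hex x))). }
  destruct (Hpol (fun x y => c (h x) y)) as
    [A [B [[fA [gA [HA1 [HA2 HA3]]]] [HB [col Hcol]]]]].
  set (P := fun z => proj1_sig (gA z)).
  assert (PS : forall a b, wlt a b -> wlt (P a) (P b)).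
  { intros a b H. unfold P. apply HA3. rewrite !HA2. exact H. }
  assert (cofA : forall x, exists a, A a /\ (x = a \/ wlt x a)).
  { intros x. exists (P x). split; [exact (proj2_sig (gA x)) | apply strict_ge; auto]. }
  set (S := fun x => exists a, A a /\ x = G (h a)).
  assert (cofS : cofinal S).
  { intros x. destruct (cofA x) as [a [Aa Ha]]. exists (G (h a)).
    split; [exists a; auto|].
    destruct Ha as [<-|Ha]; [apply hh|]. right.
    destruct (hh a) as [E|E]; [rewrite <- E; exact Ha| eapply wlt_trans; eauto]. }
  destruct (Hcof S cofS) as [f Hf].
  set (sel := fun z => proj1_sig (cid _ _ (proj2_sig (f z)))).
  assert (selS : forall z, A (sel z) /\ proj1_sig (f z) = G (h (sel z))).
  { intros z. unfold sel. exact (proj2_sig (cid _ _ (proj2_sig (f z)))). }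
  set (F := fun z => h (sel z)).
  assert (FS : forall a b, wlt a b -> wlt (F a) (F b)).
  { intros a b H. apply (strict_refl G GS). unfold F.
    destruct (selS a) as [_ Ea]. destruct (selS b) as [_ Eb].
    rewrite <- Ea, <- Eb. apply Hf. exact H. }
  exists (fun xi => exists z, F z = xi), B.
  split; [apply image_otp; exact FS|]. split; [exact HB|].
  exists col. intros x y [z <-] By. unfold F.
  apply (Hcol (sel z) y); [apply selS | exact By].
Qed.
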